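(* Let $n$ be even, $\epsilon>0$, and let $\ket{\psi}=\ket{\phi_1}_C\otimes\ket{\phi_2}_{\overline{C}}$ be an $n$-qubit state which is product across an unknown cut $C\subseteq[n]$ with $|C|=n/2$, where the factor states $\ket{\phi_1},\ket{\phi_2}$ are each $\epsilon$-far from all separable $(n/2)$-qubit states. Then there is a quantum algorithm (non-adaptive Fourier sampling followed by classical linear algebra) which finds the hidden cut $C$ (i.e. the unordered bipartition $\{C,\overline{C}\}$) with high probability using $O(n^2/\epsilon^2)$ copies of $\ket{\psi}$. The algorithm requires coherent access to $O(n/\epsilon^2)$ copies at a time, on which it acts with circuits of depth $O(\log(n/\epsilon^2))$ given $O(n^2/\epsilon^2)$ ancillary qubits.
   Context: For a set $Q$ of qubits, a separable state on $Q$ is one of the form $\ket{a}_A\otimes\ket{b}_{Q\setminus A}$ with $A\subsetneq Q$ nonempty. A pure state $\ket{\phi}$ is $\epsilon$-far from a set $\mathcal{P}$ if $|\langle\phi|\chi\rangle|^2\le1-\epsilon^2$ for all $\ket{\chi}\in\mathcal{P}$. $\overline{C}=[n]\setminus C$. *)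

(* Defs.v *)
From HB Require Import structures.
From mathcomp Require Import all_boot all_order all_algebra.
From mathcomp Require Import all_classical all_reals all_analysis.
From mathcomp Require Import complex.
From Stdlib Require Lists.List.
Set Implicit Arguments. Unset Strict Implicit. Unset Printing Implicit Defensive.
Import Order.TTheory GRing.Theory Num.Theory.
Local Open Scope ring_scope.

(** Pure quantum states on a register of qubits indexed by a finite type [T]:
    amplitude functions on computational basis strings [{ffun T -> bool}]. *)
Definition bits (T : finType) := {ffun T -> bool}.
Definition qstate (R : realType) (T : finType) := bits T -> R[i].

Definition sqmod (R : realType) (z : R[i]) : R :=
  (complex.Re z) ^+ 2 + (complex.Im z) ^+ 2.

Definition normalized (R : realType) (T : finType) (v : qstate R T) : Prop :=
  \sum_(x : bits T) sqmod (v x) = 1.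

Definition inner (R : realType) (T : finType) (u v : qstate R T) : R[i] :=
  \sum_(x : bits T) conjc (u x) * v x.

Definition subreg (T : finType) (A : {set T}) := {i : T | i \in A}.
Definition restr (T : finType) (A : {set T}) (x : bits T) : bits (subreg A) :=
  [ffun i => x (val i)].

Definition separable (R : realType) (T : finType) (phi : qstate R T) : Prop :=
  exists A : {set T}, [/\ A != finset.set0, A != [set: T] &
    exists (a : qstate R (subreg A)) (b : qstate R (subreg (~: A))),
      [/\ normalized a, normalized b &
          forall x, phi x = a (restr A x) * b (restr (~: A) x)]].

Definition far_from_separable (R : realType) (T : finType) (eps : R)
    (phi : qstate R T) : Prop :=
  forall chi : qstate R T, separable chi ->
    sqmod (inner phi chi) <= 1 - eps ^+ 2.

Definition pair_index (b1 b2 : bool) : 'I_4 := inord (2 * b1 + b2)%N.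

Record gate (R : realType) (T : finType) := Gate {
  gq1 : T; gq2 : T; gU : 'M[R[i]]_4 }.

Definition unitary4 (R : realType) (U : 'M[R[i]]_4) : Prop :=
  U *m (map_mx conjc U)^T = 1%:M.

Definition gate_ok (R : realType) (T : finType) (g : gate R T) : Prop :=
  gq1 g != gq2 g /\ unitary4 (gU g).

Definition apply_gate (R : realType) (T : finType) (g : gate R T)
    (v : qstate R T) : qstate R T :=
  fun x => \sum_(y : bits T | [forall j, (j != gq1 g) && (j != gq2 g) ==> (y j == x j)])
     gU g (pair_index (x (gq1 g)) (x (gq2 g))) (pair_index (y (gq1 g)) (y (gq2 g))) * v y.

Definition gate_support (R : realType) (T : finType) (g : gate R T) : {set T} :=
  [set gq1 g; gq2 g].

Fixpoint layer_ok (R : realType) (T : finType) (l : seq (gate R T)) : Prop :=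
  match l with
  | [::] => True
  | g :: l' => [/\ gate_ok g,
      Stdlib.Lists.List.Forall (fun h => [disjoint gate_support g & gate_support h]) l' &
      layer_ok l']
  end.

Definition apply_layer (R : realType) (T : finType) (l : seq (gate R T))
    (v : qstate R T) : qstate R T :=
  foldl (fun w g => apply_gate g w) v l.

Definition circuit (R : realType) (T : finType) := seq (seq (gate R T)).
Definition circuit_ok (R : realType) (T : finType) (c : circuit R T) : Prop :=
  Stdlib.Lists.List.Forall (@layer_ok R T) c.
Definition depth (R : realType) (T : finType) (c : circuit R T) : nat := size c.
Definition apply_circuit (R : realType) (T : finType) (c : circuit R T)
    (v : qstate R T) : qstate R T :=
  foldl (fun w l => apply_layer l w) v c.

(** Register for one coherent round: k copies of the n-qubit input and a ancillas. *)
Definition register (n k a : nat) : finType := (('I_k * 'I_n) + 'I_a)%type.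

Definition input_state (R : realType) (n k a : nat) (psi : qstate R 'I_n)
    : qstate R (register n k a) :=
  fun x => (\prod_(j < k) psi [ffun i => x (inl (j, i))]) *
           (if [forall t : 'I_a, ~~ x (inr t)] then 1 else 0).

Definition outcome_prob (R : realType) (n k a : nat) (c : circuit R (register n k a))
    (psi : qstate R 'I_n) (x : bits (register n k a)) : R :=
  sqmod (apply_circuit c (@input_state R n k a psi) x).

(** Non-adaptive algorithm: r independent rounds, each running the same circuit
    on k fresh copies plus a ancillas and measuring everything; then an
    arbitrary classical post-processing [post] of the r outcomes outputs a set
    of qubits. *)
Definition success_prob (R : realType) (n k a r : nat) (c : circuit R (register n k a))
    (post : {ffun 'I_r -> bits (register n k a)} -> {set 'I_n})
    (psi : qstate R 'I_n) (C : {set 'I_n}) : R :=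
  \sum_(s : {ffun 'I_r -> bits (register n k a)} | (post s == C) || (post s == ~: C))
     \prod_(j < r) outcome_prob c psi (s j).

Definition hidden_cut_instance (R : realType) (n : nat) (eps : R)
    (psi : qstate R 'I_n) (C : {set 'I_n}) : Prop :=
  #|C| = n./2 /\
  exists (phi1 : qstate R (subreg C)) (phi2 : qstate R (subreg (~: C))),
    [/\ normalized phi1, normalized phi2,
        far_from_separable eps phi1, far_from_separable eps phi2 &
        forall x, psi x = phi1 (restr C x) * phi2 (restr (~: C) x)].

(* Main.v *)
Require Import Defs.
From HB Require Import structures.
From mathcomp Require Import all_boot all_order all_algebra.
From mathcomp Require Import all_classical all_reals all_analysis.
From mathcomp Require Import complex.
Import Order.TTheory GRing.Theory Num.Theory.
Local Open Scope ring_scope.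
From mathcomp Require Import ring lra.
Set Implicit Arguments. Unset Strict Implicit. Unset Printing Implicit Defensive.

Section Join.
Variable X : finType.
Variable T : {set X}.

Definition join (t : bits (subreg T)) (r : bits (subreg (~: T))) : bits X :=
  [ffun i => match insub i : option (subreg T) with
             | Some s => t s
             | None => match insub i : option (subreg (~: T)) with
                       | Some s => r s | None => false end end].

Lemma restr_join_l t r : restr T (join t r) = t.
Proof.
apply/ffunP => s; rewrite !ffunE.
case: insubP => [s' _ /val_inj -> //|]; by rewrite (valP s).
Qed.

Lemma restr_join_r t r : restr (~: T) (join t r) = r.
Proof.
apply/ffunP => s; rewrite !ffunE.
case: insubP => [s' Hs' _|_].
  by have := valP s; rewrite inE Hs'.
case: insubP => [s' _ /val_inj -> //|]; by rewrite (valP s).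
Qed.

Lemma join_restr x : join (restr T x) (restr (~: T) x) = x.
Proof.
apply/ffunP => i; rewrite !ffunE.
case: insubP => [s _ <-|Hi]; first by rewrite ffunE.
case: insubP => [s _ <-|]; first by rewrite ffunE.
by rewrite inE Hi.
Qed.

Lemma sum_join (V : nmodType) (F : bits X -> V) :
  \sum_(x : bits X) F x = \sum_(t : bits (subreg T)) \sum_(r : bits (subreg (~: T))) F (join t r).
Proof.
rewrite pair_big /=.
rewrite (reindex (fun p : bits (subreg T) * bits (subreg (~: T)) => join p.1 p.2)) //=.
exists (fun x => (restr T x, restr (~: T) x)) => [[t r] _|x _] /=.
  by rewrite restr_join_l restr_join_r.
by rewrite join_restr.
Qed.

Definition mix (v u : bits X) : bits X := [ffun i => if i \in T then v i else u i].

Lemma mix_join t r t' r' : mix (join t' r') (join t r) = join t' r.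
Proof.
apply/ffunP => i; rewrite !ffunE.
case: insubP => [s Hs <-|Hi]; first by rewrite (valP s).
by rewrite (negbTE Hi).
Qed.

End Join.


Section Cplx.
Variable R : realType.
Local Notation C := R[i].

Lemma conj_nrm (z : C) : conjc (`|z| ^+ 2) = `|z| ^+ 2.
Proof. by rewrite sqr_normc rmorphM /= conjcK mulrC. Qed.

Lemma real_conj_sum (I : finType) (F : I -> C) :
  conjc (\sum_i `|F i| ^+ 2) = \sum_i `|F i| ^+ 2.
Proof. rewrite rmorph_sum; apply: eq_bigr => i _; exact: conj_nrm. Qed.

Lemma sum_nrm_ge0 (I : finType) (F : I -> C) : 0 <= \sum_i `|F i| ^+ 2.
Proof. by apply: sumr_ge0 => i _; rewrite exprn_ge0. Qed.

Lemma sq_le_cancel (x y : C) : 0 <= x -> 0 <= y -> x * x <= y * x -> x <= y.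
Proof.
move=> x0 y0 H; have [->//|xn0] := eqVneq x 0.
have xp : 0 < x by rewrite lt_def xn0 x0.
by rewrite -(ler_pM2r xp).
Qed.

Variables (I J : finType) (A : I -> J -> C) (c : C).
Hypothesis c0 : 0 <= c.
Hypothesis H : forall (a : I -> C) (b : J -> C),
  `|\sum_t \sum_r conjc (A t r) * (a t * b r)| ^+ 2 <=
    c * (\sum_t `|a t| ^+ 2) * (\sum_r `|b r| ^+ 2).
Hypothesis tr1 : \sum_t \sum_r `|A t r| ^+ 2 = 1.

Definition Mm t t' := \sum_r A t r * conjc (A t' r).

Lemma Mm_conj t t' : conjc (Mm t t') = Mm t' t.
Proof. by rewrite rmorph_sum; apply: eq_bigr => r _; rewrite rmorphM /= conjcK mulrC. Qed.

Lemma step1 (a : I -> C) :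
  \sum_r `|\sum_t conjc (A t r) * a t| ^+ 2 <= c * \sum_t `|a t| ^+ 2.
Proof.
set d := fun r => \sum_t conjc (A t r) * a t.
have := H a (fun r => conjc (d r)).
have -> : \sum_t \sum_r conjc (A t r) * (a t * conjc (d r)) = \sum_r `|d r| ^+ 2.
  rewrite exchange_big /=; apply: eq_bigr => r _.
  by rewrite sqr_normc /d mulr_suml; apply: eq_bigr => t _; rewrite mulrA.
have -> : \sum_r `|conjc (d r)| ^+ 2 = \sum_r `|d r| ^+ 2.
  by apply: eq_bigr => r _; rewrite normcJ.
move=> Hle.
apply: sq_le_cancel; first exact: sum_nrm_ge0.
  by apply: mulr_ge0 => //; exact: sum_nrm_ge0.
have e : forall z : C, 0 <= z -> `|z| = z by move=> z /ger0_norm.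
by rewrite -expr2 -[X in X ^+ 2]e //; exact: sum_nrm_ge0.
Qed.


Definition Pur := \sum_t \sum_t' `|Mm t t'| ^+ 2.

Lemma nrm_sub (x y p : C) : conjc p = p ->
  `|x - p * y| ^+ 2 = `|x| ^+ 2 - p * (x * conjc y + conjc (x * conjc y)) + p ^+ 2 * `|y| ^+ 2.
Proof.
move=> hp; rewrite !sqr_normc rmorphB !rmorphM /= hp conjcK; ring.
Qed.

Lemma purity_bound : Pur <= c.
Proof.
set d := fun j r => \sum_t conjc (A t r) * Mm t j.
have s2 : \sum_j \sum_r `|d j r| ^+ 2 <= c * Pur.
  rewrite /Pur [X in _ <= _ * X]exchange_big mulr_sumr; apply: ler_sum => j _.
  exact: (step1 (fun t => Mm t j)).
have X1 : \sum_j \sum_r d j r * conjc (conjc (A j r)) = Pur.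
  rewrite /Pur [RHS]exchange_big /=; apply: eq_bigr => j _.
  under eq_bigr do rewrite conjcK /d mulr_suml.
  rewrite exchange_big /=; apply: eq_bigr => t _.
  rewrite sqr_normc Mm_conj /Mm mulr_sumr; apply: eq_bigr => r _.
  ring.
have Pr : conjc Pur = Pur.
  by rewrite /Pur rmorph_sum; apply: eq_bigr => t _; exact: real_conj_sum.
have s3 : 0 <= \sum_j \sum_r `|d j r - Pur * conjc (A j r)| ^+ 2.
  by apply: sumr_ge0 => j _; exact: sum_nrm_ge0.
have E : \sum_j \sum_r `|d j r - Pur * conjc (A j r)| ^+ 2 =
    \sum_j \sum_r `|d j r| ^+ 2 - Pur * Pur.
  under eq_bigr do under eq_bigr do rewrite nrm_sub //.
  under eq_bigr do rewrite big_split sumrB -mulr_sumr -mulr_sumr big_split /= -rmorph_sum.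
  rewrite big_split sumrB -mulr_sumr -mulr_sumr big_split /= -rmorph_sum X1 /= Pr.
  have -> : \sum_j \sum_r `|conjc (A j r)| ^+ 2 = 1.
    by rewrite -tr1; apply: eq_bigr => j _; apply: eq_bigr => r _; rewrite normcJ.
  by rewrite mulr1; ring.
have P0 : 0 <= Pur by apply: sumr_ge0 => t _; exact: sum_nrm_ge0.
apply: sq_le_cancel => //; apply: le_trans _ s2.
by rewrite -subr_ge0 -E.
Qed.

End Cplx.


Section QS.
Variable R : realType.
Local Notation C := R[i].

Definition Qf (X : finType) (T : {set X}) (f : qstate R X) : C :=
  \sum_u \sum_v conjc (f u * f v) * (f (mix T v u) * f (mix T u v)).

Lemma Q_pur (X : finType) (T : {set X}) (f : qstate R X) :
  Qf T f = Pur (fun (t : bits (subreg T)) (r : bits (subreg (~: T))) => f (join t r)).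
Proof.
rewrite /Qf /Pur (sum_join T); apply: eq_bigr => t _.
under eq_bigr do rewrite (sum_join T) exchange_big /=.
under eq_bigr do rewrite exchange_big /=.
rewrite exchange_big /=; apply: eq_bigr => t' _.
rewrite sqr_normc /Mm rmorph_sum big_distrlr /= exchange_big /=.
apply: eq_bigr => r _; apply: eq_bigr => r' _.
rewrite !mix_join /= !rmorphM /= conjcK; ring.
Qed.

Lemma sqmodC (z : C) : ((sqmod z)%:C)%C = `|z| ^+ 2.
Proof. by rewrite /sqmod add_Re2_Im2. Qed.


Lemma sqmod_ge0 (z : C) : 0 <= sqmod z.
Proof. by rewrite /sqmod addr_ge0 // sqr_ge0. Qed.

Lemma sqmod_eq0 (z : C) : sqmod z = 0 -> z = 0.
Proof.
case: z => x y; rewrite /sqmod /= => h.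
have hx : x ^+ 2 = 0 by apply/eqP; rewrite eq_le -{1}h lerDl sqr_ge0 sqr_ge0.
have hy : y ^+ 2 = 0 by move: h; rewrite hx add0r.
by move/eqP: hx; rewrite sqrf_eq0 => /eqP ->; move/eqP: hy; rewrite sqrf_eq0 => /eqP ->.
Qed.

Lemma sqmod_scale (k : R) (z : C) : sqmod (((k%:C)%C) * z) = k ^+ 2 * sqmod z.
Proof. by case: z => x y; rewrite /sqmod /=; ring. Qed.

Lemma sqmodM (z w : C) : sqmod (z * w) = sqmod z * sqmod w.
Proof. by case: z => x y; case: w => u v; rewrite /sqmod /=; ring. Qed.

Lemma sum_sqmodC (I : finType) (F : I -> C) :
  ((\sum_i sqmod (F i))%:C)%C = \sum_i `|F i| ^+ 2.
Proof. by rewrite rmorph_sum; apply: eq_bigr => i _; exact: sqmodC. Qed.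

Lemma normalize_vec (I : finType) (a : I -> C) :
  0 < \sum_i sqmod (a i) ->
  let k := (Num.sqrt (\sum_i sqmod (a i)))^-1 in
  \sum_i sqmod (((k%:C)%C) * a i) = 1 /\ k ^+ 2 * \sum_i sqmod (a i) = 1.
Proof.
move=> Np k.
have kk : k ^+ 2 * \sum_i sqmod (a i) = 1.
  rewrite /k exprVn sqr_sqrtr ?mulVf //; first by rewrite gt_eqF.
  exact: ltW.
split => //; rewrite -kk mulr_sumr; apply: eq_bigr => i _; exact: sqmod_scale.
Qed.

Lemma far_H (X : finType) (T : {set X}) (f : qstate R X) (eps : R) :
  T != finset.set0 -> T != [set: X] -> far_from_separable eps f ->
  forall (a : bits (subreg T) -> C) (b : bits (subreg (~: T)) -> C),
  `|\sum_t \sum_r conjc (f (join t r)) * (a t * b r)| ^+ 2 <=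
    (((1 - eps ^+ 2)%:C)%C) * (\sum_t `|a t| ^+ 2) * (\sum_r `|b r| ^+ 2).
Proof.
move=> T0 T1 far a b.
rewrite -!sum_sqmodC -sqmodC -!rmorphM /= lecR.
set S := \sum_t \sum_r _.
have Na0 : 0 <= \sum_t sqmod (a t) by apply: sumr_ge0 => t _; exact: sqmod_ge0.
have Nb0 : 0 <= \sum_t sqmod (b t) by apply: sumr_ge0 => t _; exact: sqmod_ge0.
have [Na|Nap] := eqVneq (\sum_t sqmod (a t)) 0.
  have a0 : forall t, a t = 0.
    move=> t; apply: sqmod_eq0; move/eqP: Na; rewrite psumr_eq0 => [/allP /(_ t)|].
      by rewrite mem_index_enum => /(_ isT) /eqP.
    by move=> i _; exact: sqmod_ge0.
  have -> : S = 0 by rewrite /S big1 // => t _; rewrite big1 // => r _; rewrite a0 mul0r mulr0.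
  by rewrite Na /sqmod /= expr0n /= addr0 mulr0 mul0r.
have [Nb|Nbp] := eqVneq (\sum_t sqmod (b t)) 0.
  have b0 : forall t, b t = 0.
    move=> t; apply: sqmod_eq0; move/eqP: Nb; rewrite psumr_eq0 => [/allP /(_ t)|].
      by rewrite mem_index_enum => /(_ isT) /eqP.
    by move=> i _; exact: sqmod_ge0.
  have -> : S = 0 by rewrite /S big1 // => t _; rewrite big1 // => r _; rewrite b0 !mulr0.
  by rewrite Nb /sqmod /= expr0n /= addr0 mulr0.
have Nap' : 0 < \sum_t sqmod (a t) by rewrite lt_def Nap Na0.
have Nbp' : 0 < \sum_t sqmod (b t) by rewrite lt_def Nbp Nb0.
have [na ka] := normalize_vec Nap'.
have [nb kb] := normalize_vec Nbp'.
set ka' := (Num.sqrt _)^-1 in na ka.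
set kb' := (Num.sqrt _)^-1 in nb kb.
set a' := fun t => ((ka'%:C)%C) * a t.
set b' := fun r => ((kb'%:C)%C) * b r.
have := far (fun x => a' (restr T x) * b' (restr (~: T) x)).
have -> : inner f (fun x => a' (restr T x) * b' (restr (~: T) x)) = (((ka' * kb')%:C)%C) * S.
  rewrite /inner (sum_join T) /S mulr_sumr; apply: eq_bigr => t _.
  rewrite mulr_sumr; apply: eq_bigr => r _.
  rewrite restr_join_l restr_join_r /a' /b' rmorphM /=; ring.
rewrite sqmod_scale => H.
have H' : (ka' * kb') ^+ 2 * sqmod S <= (ka' * kb') ^+ 2 * ((1 - eps ^+ 2) * (\sum_t sqmod (a t)) * (\sum_t sqmod (b t))).
  apply: (le_trans (H _)).
    exists T; split => //; exists a', b'; split => //.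
  suff -> : (ka' * kb') ^+ 2 * ((1 - eps ^+ 2) * (\sum_t sqmod (a t)) * (\sum_t sqmod (b t)))
     = 1 - eps ^+ 2 by [].
  transitivity ((1 - eps ^+ 2) * (ka' ^+ 2 * \sum_t sqmod (a t)) * (kb' ^+ 2 * \sum_t sqmod (b t))).
    by ring.
  by rewrite ka kb !mulr1.
rewrite ler_pM2l in H' => //.
rewrite exprn_gt0 // mulr_gt0 // invr_gt0 sqrtr_gt0 //.
Qed.


Lemma normalizedC (X : finType) (f : qstate R X) :
  normalized f -> \sum_x `|f x| ^+ 2 = 1.
Proof. by move=> nf; rewrite -sum_sqmodC nf. Qed.

Lemma Q_far (X : finType) (T : {set X}) (f : qstate R X) (eps : R) :
  T != finset.set0 -> T != [set: X] -> normalized f -> far_from_separable eps f ->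
  eps ^+ 2 <= 1 ->
  Qf T f <= (((1 - eps ^+ 2)%:C)%C).
Proof.
move=> T0 T1 nf far e1; rewrite Q_pur; apply: purity_bound.
- by rewrite ler0c subr_ge0.
- exact: far_H.
- by rewrite -(normalizedC nf) (sum_join T).
Qed.

Lemma Q_ge0 (X : finType) (T : {set X}) (f : qstate R X) : 0 <= Qf T f.
Proof. by rewrite Q_pur; apply: sumr_ge0 => t _; exact: sum_nrm_ge0. Qed.

Lemma Q_real (X : finType) (T : {set X}) (f : qstate R X) : conjc (Qf T f) = Qf T f.
Proof. by rewrite Q_pur /Pur rmorph_sum; apply: eq_bigr => t _; exact: real_conj_sum. Qed.

Lemma mixK (X : finType) (T : {set X}) (u v : bits X) :
  mix T (mix T u v) (mix T v u) = u.
Proof. by apply/ffunP => i; rewrite !ffunE; case: (i \in T). Qed.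

Lemma cross_le (x y : C) : conjc x * y + conjc (conjc x * y) <= `|x| ^+ 2 + `|y| ^+ 2.
Proof.
rewrite -subr_ge0.
have -> : `|x| ^+ 2 + `|y| ^+ 2 - (conjc x * y + conjc (conjc x * y)) = `|x - y| ^+ 2.
  by rewrite !sqr_normc rmorphB !rmorphM /= conjcK; ring.
exact: exprn_ge0.
Qed.

Lemma Q_re_le (X : finType) (T : {set X}) (f : qstate R X) :
  \sum_x `|f x| ^+ 2 = 1 -> Qf T f + conjc (Qf T f) <= 2.
Proof.
move=> nf.
have E1 : \sum_u \sum_v `|f u * f v| ^+ 2 = 1.
  rewrite -[RHS]mulr1 -{1}nf mulr_suml; apply: eq_bigr => u _.
  rewrite -nf mulr_sumr; apply: eq_bigr => v _; by rewrite normrM exprMn.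
have E2 : \sum_u \sum_v `|f (mix T v u) * f (mix T u v)| ^+ 2 = 1.
  rewrite -E1 !pair_big /=.
  rewrite (reindex_inj (h := fun p : bits X * bits X => (mix T p.2 p.1, mix T p.1 p.2))) /=.
    by apply: eq_bigr => -[u v] _ /=; rewrite !mixK mulrC.
  move=> [u v] [u' v'] /= [e1 e2]; congr pair.
    by rewrite -(mixK T u v) -(mixK T u' v') e1 e2.
  by rewrite -(mixK T v u) -(mixK T v' u') e1 e2.
rewrite /Qf rmorph_sum -big_split /=.
have -> : 2 = \sum_u \sum_v (`|f u * f v| ^+ 2 + `|f (mix T v u) * f (mix T u v)| ^+ 2) :> C.
  by under eq_bigr do rewrite big_split; rewrite big_split /= E1 E2.
apply: ler_sum => u _; rewrite rmorph_sum -big_split /=; apply: ler_sum => v _.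
exact: cross_le.
Qed.

End QS.


Section Local.
Variable R : realType.
Local Notation C := R[i].
Variable T : finType.
Variables q1 q2 : T.
Hypothesis q12 : q1 != q2.

Definition upd (x : bits T) (b1 b2 : bool) : bits T :=
  [ffun j => if j == q1 then b1 else if j == q2 then b2 else x j].

Definition agree (x y : bits T) := [forall j, (j != q1) && (j != q2) ==> (y j == x j)].

Lemma upd_q1 x b1 b2 : upd x b1 b2 q1 = b1.
Proof. by rewrite ffunE eqxx. Qed.
Lemma upd_q2 x b1 b2 : upd x b1 b2 q2 = b2.
Proof. by rewrite ffunE eq_sym (negbTE q12) eqxx. Qed.
Lemma upd_upd x b1 b2 c1 c2 : upd (upd x b1 b2) c1 c2 = upd x c1 c2.
Proof. by apply/ffunP => j; rewrite !ffunE; case: eqP => //; case: eqP. Qed.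
Lemma upd_id x : upd x (x q1) (x q2) = x.
Proof. by apply/ffunP => j; rewrite !ffunE; case: eqP => [->//|]; case: eqP => [->//|]. Qed.
Lemma agree_upd x b1 b2 : agree x (upd x b1 b2).
Proof.
by apply/forallP => j; apply/implyP => /andP[h1 h2]; rewrite ffunE (negbTE h1) (negbTE h2).
Qed.
Lemma agreeE x y : agree x y -> upd x (y q1) (y q2) = y.
Proof.
move/forallP => h; apply/ffunP => j; rewrite !ffunE.
case: eqP => [->//|/eqP h1]; case: eqP => [->//|/eqP h2].
by have /implyP := h j; rewrite h1 h2 => /(_ isT) /eqP.
Qed.

Lemma sum_local (V : nmodType) x (F : bits T -> V) :
  \sum_(y | agree x y) F y = \sum_(b1 : bool) \sum_(b2 : bool) F (upd x b1 b2).
Proof.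
rewrite pair_big /=.
rewrite (reindex_onto (fun p : bool * bool => upd x p.1 p.2) (fun y => (y q1, y q2))) /=.
  apply: eq_bigl => -[b1 b2] /=; rewrite agree_upd upd_q1 upd_q2 eqxx.
  done.
by move=> y /agreeE.
Qed.


Definition base (x : bits T) := (x q1 == false) && (x q2 == false).

Lemma L_base (V : nmodType) (H : bits T -> V) :
  \sum_x H x = \sum_(x0 | base x0) \sum_(b1 : bool) \sum_(b2 : bool) H (upd x0 b1 b2).
Proof.
rewrite (partition_big (fun x => upd x false false) base) /=; last first.
  by move=> x _; rewrite /base upd_q1 upd_q2.
apply: eq_bigr => x0 bx0; rewrite -sum_local; apply: eq_bigl => x.
apply/eqP/idP => [<-|ag].
  by apply/forallP => j; apply/implyP => /andP[h1 h2]; rewrite ffunE (negbTE h1) (negbTE h2).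
move/andP: bx0 => [/eqP h1 /eqP h2].
apply/ffunP => j; rewrite ffunE.
case: eqP => [->//|/eqP j1]; case: eqP => [->//|/eqP j2].
by move/forallP: ag => /(_ j) /implyP; rewrite j1 j2 => /(_ isT) /eqP.
Qed.

End Local.

Definition dec (k : 'I_4) : bool * bool := ((2 <= k)%N, odd k).

Lemma dec_pair b1 b2 : dec (pair_index b1 b2) = (b1, b2).
Proof. by case: b1; case: b2; rewrite /dec /pair_index /= inordK. Qed.

Lemma sum_pair (V : nmodType) (F : 'I_4 -> V) :
  \sum_(b1 : bool) \sum_(b2 : bool) F (pair_index b1 b2) = \sum_k F k.
Proof.
rewrite pair_big /= (reindex (fun p : bool * bool => pair_index p.1 p.2)) //=.
exists dec => [[b1 b2] _|k _] /=; first by rewrite dec_pair.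
apply: val_inj; rewrite /pair_index /dec /= inordK; last first.
  by case: (2 <= k)%N; case: (odd k).
by case: k => -[|[|[|[|]]]].
Qed.

Section Gate.
Variable R : realType.
Local Notation C := R[i].
Variable T : finType.

Lemma apply_gateE (g : gate R T) (v : qstate R T) x : gq1 g != gq2 g ->
  apply_gate g v x = \sum_(b1 : bool) \sum_(b2 : bool)
    gU g (pair_index (x (gq1 g)) (x (gq2 g))) (pair_index b1 b2) * v (upd (gq1 g) (gq2 g) x b1 b2).
Proof.
move=> h; rewrite /apply_gate.
rewrite (sum_local h); apply: eq_bigr => b1 _; apply: eq_bigr => b2 _.
by rewrite upd_q1 (upd_q2 h).
Qed.

Lemma unit_sum (U : 'M[C]_4) (w : 'I_4 -> C) : unitary4 U ->
  \sum_k `|\sum_k' U k k' * w k'| ^+ 2 = \sum_k `|w k| ^+ 2.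
Proof.
rewrite /unitary4 => /mulmx1C HU.
have E : forall a b : 'I_4, \sum_k conjc (U k b) * U k a = (b == a)%:R.
  move=> a b; have := congr1 (fun M : 'M[C]_4 => M b a) HU; rewrite !mxE => <-.
  by apply: eq_bigr => k _; rewrite !mxE.
transitivity (\sum_k \sum_a \sum_b U k a * w a * conjc (U k b * w b)).
  apply: eq_bigr => k _; rewrite sqr_normc rmorph_sum big_distrlr.
  by apply: eq_bigr => a _; apply: eq_bigr => b _.
rewrite exchange_big /=.
transitivity (\sum_a \sum_b w a * conjc (w b) * (\sum_k conjc (U k b) * U k a)).
  apply: eq_bigr => a _; rewrite exchange_big /=; apply: eq_bigr => b _.
  rewrite mulr_sumr; apply: eq_bigr => k _; rewrite rmorphM /=; ring.
apply: eq_bigr => a _; rewrite (bigD1 a) //= E eqxx mulr1 [X in _ + X]big1 ?addr0 ?sqr_normc //.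
by move=> b ba; rewrite E (negbTE ba) mulr0.
Qed.


Lemma gate_iso (g : gate R T) (v : qstate R T) : gq1 g != gq2 g -> unitary4 (gU g) ->
  \sum_x `|apply_gate g v x| ^+ 2 = \sum_x `|v x| ^+ 2.
Proof.
move=> h hU; rewrite (L_base h) [RHS](L_base h); apply: eq_bigr => x0 _.
pose w k := v (upd (gq1 g) (gq2 g) x0 (dec k).1 (dec k).2).
transitivity (\sum_(b1 : bool) \sum_(b2 : bool)
   `|\sum_(c1 : bool) \sum_(c2 : bool) gU g (pair_index b1 b2) (pair_index c1 c2) * w (pair_index c1 c2)| ^+ 2).
  apply: eq_bigr => b1 _; apply: eq_bigr => b2 _.
  rewrite apply_gateE // upd_q1 (upd_q2 h); congr (`|_| ^+ 2).
  apply: eq_bigr => c1 _; apply: eq_bigr => c2 _.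
  by rewrite upd_upd /w dec_pair.
transitivity (\sum_(b1 : bool) \sum_(b2 : bool) `|w (pair_index b1 b2)| ^+ 2); last first.
  by apply: eq_bigr => b1 _; apply: eq_bigr => b2 _; rewrite /w dec_pair.
rewrite (sum_pair (fun k => `|w k| ^+ 2)) -(unit_sum w hU).
rewrite -(sum_pair (fun k => `|\sum_k' gU g k k' * w k'| ^+ 2)).
apply: eq_bigr => b1 _; apply: eq_bigr => b2 _.
by rewrite (sum_pair (fun k' => gU g (pair_index b1 b2) k' * w k')).
Qed.

End Gate.

Section Layer.
Variable R : realType.
Local Notation C := R[i].
Variable T : finType.

Lemma apply_gate_lin (g : gate R T) (a b : C) (v w : qstate R T) :
  apply_gate g (fun y => a * v y + b * w y) = fun x => a * apply_gate g v x + b * apply_gate g w x.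
Proof.
apply: boolp.funext => x; rewrite /apply_gate !mulr_sumr -big_split /=.
by apply: eq_bigr => y _; ring.
Qed.

Lemma apply_layer_cons (g : gate R T) l v : apply_layer (g :: l) v = apply_layer l (apply_gate g v).
Proof. by []. Qed.

Lemma apply_layer_lin (l : seq (gate R T)) (a b : C) (v w : qstate R T) :
  apply_layer l (fun y => a * v y + b * w y) = fun x => a * apply_layer l v x + b * apply_layer l w x.
Proof.
elim: l v w => [|g l IH] v w //.
by rewrite !apply_layer_cons apply_gate_lin IH.
Qed.

Lemma layer_iso (l : seq (gate R T)) (v : qstate R T) :
  (forall g, List.In g l -> gate_ok g) ->
  \sum_x `|apply_layer l v x| ^+ 2 = \sum_x `|v x| ^+ 2.
Proof.
elim: l v => [|g l IH] v hl //.
rewrite apply_layer_cons IH; last by move=> g' h; apply: hl; right.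
have [h1 h2] := hl g (or_introl erefl).
exact: gate_iso.
Qed.

End Layer.


Section Bell.
Variable R : realType.
Local Notation C := R[i].

Definition bell (k l : 'I_4) : R :=
  match val k, val l with
  | 0, 0 => 1 | 0, 3 => 1
  | 1, 1 => 1 | 1, 2 => 1
  | 2, 0 => 1 | 2, 3 => -1
  | 3, 1 => 1 | 3, 2 => -1
  | _, _ => 0 end.

Definition s2 : R := (Num.sqrt 2)^-1.

Lemma s2sq : s2 * s2 = 2^-1.
Proof. by rewrite /s2 -invfM -expr2 sqr_sqrtr. Qed.

Definition Bm : 'M[C]_4 := \matrix_(k, l) (((s2 * bell k l)%:C)%C).

Definition sg (k : 'I_4) : R := if val k == 3%N then -1 else 1.

Definition swp (l : 'I_4) : 'I_4 := pair_index (dec l).2 (dec l).1.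

Lemma bell_swp k l : bell k (swp l) = sg k * bell k l.
Proof.
by case: k => -[|[|[|[|k]]]] hk; case: l => -[|[|[|[|l]]]] hl;
  rewrite /bell /swp /sg /pair_index /dec /= ?inordK //=; lra.
Qed.

Lemma Bm_swp k b1 b2 : Bm k (pair_index b2 b1) = ((sg k)%:C)%C * Bm k (pair_index b1 b2).
Proof.
have -> : pair_index b2 b1 = swp (pair_index b1 b2) by rewrite /swp dec_pair.
by rewrite !mxE bell_swp -rmorphM /=; congr (_ %:C)%C; ring.
Qed.

Lemma Bm_unitary : unitary4 Bm.
Proof.
apply/matrixP => k l; rewrite !mxE.
under eq_bigr do rewrite !mxE conjc_real -rmorphM /=.
rewrite -rmorph_sum /=.
have -> : ((k == l)%:R : C) = ((((k == l)%:R : R))%:C)%C by case: (k == l); rewrite ?rmorph0 ?rmorph1.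
congr (_ %:C)%C.

rewrite !big_ord_recr big_ord0 /=.
have hs := s2sq.
by case: k => -[|[|[|[|k]]]] hk; case: l => -[|[|[|[|l]]]] hl;
  rewrite /bell /= ?inordK //=; nra.
Qed.


Variable n : nat.
Local Notation reg := (register n 2 0).

Definition qa (i : 'I_n) : reg := inl (ord0, i).
Definition qb (i : 'I_n) : reg := inl (ord_max, i).

Lemma qa_qb i j : qa i != qb j.
Proof. by apply/eqP => -[]. Qed.
Lemma qa_inj i j : (qa i == qa j) = (i == j).
Proof. by apply/eqP/eqP => [[]|->]. Qed.
Lemma qb_inj i j : (qb i == qb j) = (i == j).
Proof. by apply/eqP/eqP => [[]|->]. Qed.

Definition gi (i : 'I_n) : gate R reg := Gate (qa i) (qb i) Bm.
Definition lay : seq (gate R reg) := [seq gi i | i <- enum 'I_n].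

Definition swq (A : {set 'I_n}) (q : reg) : reg :=
  match q with
  | inl (j, i) => if i \in A then inl (rev_ord j, i) else q
  | inr t => inr t end.

Definition sw (A : {set 'I_n}) (x : bits reg) : bits reg := [ffun q => x (swq A q)].

Definition sgn (A : {set 'I_n}) (x : bits reg) : C :=
  \prod_(i in A) ((sg (pair_index (x (qa i)) (x (qb i))))%:C)%C.

Lemma swqa A i : swq A (qa i) = if i \in A then qb i else qa i.
Proof. by rewrite /swq /qa; case: (i \in A) => //; congr (inl (_, _)); apply: val_inj. Qed.
Lemma swqb A i : swq A (qb i) = if i \in A then qa i else qb i.
Proof. by rewrite /swq /qb; case: (i \in A) => //; congr (inl (_, _)); apply: val_inj. Qed.

Lemma sw_upd1 i x b1 b2 : sw [set i] (upd (qa i) (qb i) x b1 b2) = upd (qa i) (qb i) x b2 b1.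
Proof.
apply/ffunP => q; rewrite !ffunE.
case: q => [[j k]|t] /=; last by [].
rewrite inE; case: (eqVneq k i) => [->|ki].
  case: j => -[|[|j]] hj //=.
  - have -> : inl (Ordinal hj, i) = qa i :> reg by congr (inl (_, _)); apply: val_inj.
    have -> : inl (rev_ord (Ordinal hj), i) = qb i :> reg by congr (inl (_, _)); apply: val_inj.
    by rewrite !eqxx.
  - have -> : inl (Ordinal hj, i) = qb i :> reg by congr (inl (_, _)); apply: val_inj.
    have -> : inl (rev_ord (Ordinal hj), i) = qa i :> reg by congr (inl (_, _)); apply: val_inj.
    by rewrite !eqxx.
have h1 : (inl (j, k) == qa i :> reg) = false by apply/eqP => -[_ /eqP]; rewrite (negbTE ki).
have h2 : (inl (j, k) == qb i :> reg) = false by apply/eqP => -[_ /eqP]; rewrite (negbTE ki).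
by rewrite h1 h2.
Qed.


Lemma gi_ok i : gq1 (gi i) != gq2 (gi i).
Proof. exact: qa_qb. Qed.

Lemma gate_sw1 i (v : qstate R reg) x :
  apply_gate (gi i) (fun y => v (sw [set i] y)) x =
  ((sg (pair_index (x (qa i)) (x (qb i))))%:C)%C * apply_gate (gi i) v x.
Proof.
rewrite !apply_gateE ?gi_ok //=.
under eq_bigr do under eq_bigr do rewrite sw_upd1.
rewrite exchange_big mulr_sumr; apply: eq_bigr => b2 _.
rewrite mulr_sumr; apply: eq_bigr => b1 _.
by rewrite (Bm_swp _ b2 b1) mulrA.
Qed.

Lemma swq_eqa (A : {set 'I_n}) (j : 'I_n) (q : reg) : j \notin A -> (swq A q == qa j) = (q == qa j).
Proof.
move=> jA; case: q => [[k i]|t] //=.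
case: ifP => // iA.
have ij : i != j by apply: contraNneq jA => <-.
by rewrite /qa; apply/eqP/eqP => -[_ /eqP]; rewrite (negbTE ij).
Qed.

Lemma swq_eqb (A : {set 'I_n}) (j : 'I_n) (q : reg) : j \notin A -> (swq A q == qb j) = (q == qb j).
Proof.
move=> jA; case: q => [[k i]|t] //=.
case: ifP => // iA.
have ij : i != j by apply: contraNneq jA => <-.
by rewrite /qb; apply/eqP/eqP => -[_ /eqP]; rewrite (negbTE ij).
Qed.

Lemma gate_swA (j : 'I_n) (A : {set 'I_n}) (v : qstate R reg) x : j \notin A ->
  apply_gate (gi j) (fun y => v (sw A y)) x = apply_gate (gi j) v (sw A x).
Proof.
move=> jA; rewrite !apply_gateE ?gi_ok //=.
have -> : sw A x (qa j) = x (qa j) by rewrite ffunE swqa (negbTE jA).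
have -> : sw A x (qb j) = x (qb j) by rewrite ffunE swqb (negbTE jA).
apply: eq_bigr => b1 _; apply: eq_bigr => b2 _; congr (_ * v _).
by apply/ffunP => q; rewrite !ffunE (swq_eqa _ jA) (swq_eqb _ jA).
Qed.

Lemma sgn_upd (j : 'I_n) (B : {set 'I_n}) x b1 b2 : j \notin B -> sgn B (upd (qa j) (qb j) x b1 b2) = sgn B x.
Proof.
move=> jB; apply: eq_bigr => i iB.
have ij : i != j by apply: contraNneq jB => <-.
by rewrite !ffunE qa_inj (negbTE ij) (negbTE (qa_qb _ _)) eq_sym (negbTE (qa_qb _ _)) qb_inj (negbTE ij).
Qed.

Lemma gate_sgn (j : 'I_n) (B : {set 'I_n}) (v : qstate R reg) x : j \notin B ->
  apply_gate (gi j) (fun y => sgn B y * v y) x = sgn B x * apply_gate (gi j) v x.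
Proof.
move=> jB; rewrite !apply_gateE ?gi_ok //= mulr_sumr; apply: eq_bigr => b1 _.
rewrite mulr_sumr; apply: eq_bigr => b2 _.
by rewrite sgn_upd // mulrCA.
Qed.


Lemma swq_split (A : {set 'I_n}) j q : j \in A ->
  swq A q = swq [set j] (swq (A :\ j) q).
Proof.
move=> jA; case: q => [[k i]|t] //=.
rewrite !inE; case: (eqVneq i j) => [->|ij] /=; first by rewrite jA inE eqxx.
by case: (i \in A) => //=; rewrite inE (negbTE ij).
Qed.

Lemma sw0 x : sw finset.set0 x = x.
Proof. by apply/ffunP => q; rewrite ffunE; case: q => [[k i]|t] //=; rewrite inE. Qed.

Lemma layer_sign_gen (L : seq 'I_n) : uniq L -> forall (S : {set 'I_n}) (v : qstate R reg) x,
  apply_layer (map gi L) (fun y => v (sw S y)) x =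
  sgn [set i in S | i \in L] x * apply_layer (map gi L) v (sw [set i in S | i \notin L] x).
Proof.
elim/last_ind: L => [|L j IH] uL S v x.
  rewrite /= (_ : [set i in S | i \in [::]] = finset.set0); last by apply/setP => i; rewrite !inE andbF.
  rewrite (_ : [set i in S | i \notin [::]] = S); last by apply/setP => i; rewrite !inE andbT.
  by rewrite /sgn big_set0 mul1r.
move: uL; rewrite rcons_uniq => /andP[jL uL].
rewrite /apply_layer map_rcons !foldl_rcons -!/(apply_layer _ _).
set B := [set i in S | i \in L]; set A := [set i in S | i \notin L].
have -> : apply_layer (map gi L) (fun y => v (sw S y)) =
          fun y => sgn B y * apply_layer (map gi L) v (sw A y).
  by apply: boolp.funext => y; rewrite IH.
set W := apply_layer (map gi L) v.
have jB : j \notin B by rewrite inE (negbTE jL) andbF.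
rewrite gate_sgn //.
have [jS|jS] := boolP (j \in S).
  have jA : j \in A by rewrite inE jS jL.
  have -> : (fun y => W (sw A y)) = (fun y => (fun z => W (sw (A :\ j) z)) (sw [set j] y)).
    apply: boolp.funext => y; congr W; apply/ffunP => q.
    by rewrite !ffunE (swq_split _ jA).
  rewrite (gate_sw1 j (fun z => W (sw (A :\ j) z))) gate_swA; last by rewrite !inE eqxx.
  have -> : [set i in S | i \notin rcons L j] = A :\ j.
    by apply/setP => i; rewrite !inE mem_rcons in_cons negb_or; case: (i == j); rewrite ?andbF.
  have -> : [set i in S | i \in rcons L j] = j |: B.
    apply/setP => i; rewrite !inE mem_rcons in_cons.
    by case: eqP => [->|]; rewrite ?jS //.
  rewrite /sgn big_setU1 //= -/(sgn B x); ring.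
rewrite gate_swA; last by rewrite inE (negbTE jS).
have -> : [set i in S | i \notin rcons L j] = A.
  by apply/setP => i; rewrite !inE mem_rcons in_cons; case: eqP => [->|]; rewrite ?(negbTE jS).
have -> : [set i in S | i \in rcons L j] = B.
  by apply/setP => i; rewrite !inE mem_rcons in_cons; case: eqP => [->|]; rewrite ?(negbTE jS).
by [].
Qed.

Lemma layer_sign (S : {set 'I_n}) (v : qstate R reg) x :
  apply_layer lay (fun y => v (sw S y)) x = sgn S x * apply_layer lay v x.
Proof.
rewrite /lay layer_sign_gen ?enum_uniq //.
rewrite (_ : [set i in S | i \in enum 'I_n] = S); last by apply/setP => i; rewrite !inE mem_enum andbT.
rewrite (_ : [set i in S | i \notin enum 'I_n] = finset.set0); last by apply/setP => i; rewrite !inE mem_enum andbF.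
by rewrite sw0.
Qed.

End Bell.


Section Prob.
Variable R : realType.
Local Notation C := R[i].
Variable n : nat.
Local Notation reg := (register n 2 0).

Local Notation sgn := (@sgn R n).
Definition out (v : qstate R reg) := apply_layer (lay R n) v.

Lemma lay_ok g : List.In g (lay R n) -> gate_ok g.
Proof.
rewrite /lay => /List.in_map_iff [i [<- _]].
by split; [exact: gi_ok | exact: Bm_unitary].
Qed.

Lemma out_iso v : \sum_x `|out v x| ^+ 2 = \sum_x `|v x| ^+ 2.
Proof. exact: layer_iso lay_ok. Qed.

Lemma sgn_pm (S : {set 'I_n}) x : sgn S x = 1 \/ sgn S x = -1.
Proof.
rewrite /sgn; apply: (big_ind (fun z : C => z = 1 \/ z = -1)); first by left.
  move=> a b [->|->] [->|->]; rewrite ?mulr1 ?mul1r ?mulrNN ?mulr1; by [left|right|right|left].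
move=> i _; rewrite /sg; case: ifP => _; [right | left]; by rewrite ?rmorphN ?rmorph1.
Qed.

Lemma swK (S : {set 'I_n}) x : sw S (sw S x) = x.
Proof.
apply/ffunP => q; rewrite !ffunE; apply: congr1.
case: q => [[k i]|t] //=; case: ifP => //= ->; congr (inl (_, _)).
by apply: val_inj => /=; case: k => -[|[|k]] hk.
Qed.

Lemma sw_sum (S : {set 'I_n}) (F : bits reg -> C) : \sum_y F (sw S y) = \sum_y F y.
Proof.
by rewrite [RHS](reindex_inj (can_inj (swK S))).
Qed.

Lemma prob_even (v : qstate R reg) (S : {set 'I_n}) :
  \sum_y `|v y| ^+ 2 = 1 ->
  \sum_(x | sgn S x == 1) `|out v x| ^+ 2 =
    (2 + (\sum_y conjc (v y) * v (sw S y)) + conjc (\sum_y conjc (v y) * v (sw S y))) / 4.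
Proof.
move=> nv.
pose w := fun y => 2^-1 * v y + 2^-1 * v (sw S y).
have ow : forall x, out w x = (if sgn S x == 1 then out v x else 0).
  move=> x; rewrite /out /w apply_layer_lin layer_sign.
  have n2 : (2 : C) != 0 by rewrite pnatr_eq0.
  case: (sgn_pm S x) => ->; first by rewrite eqxx; field.
  rewrite (_ : (-1 == 1 :> C) = false); first by ring.
  by apply/negbTE; rewrite -subr_eq0 -opprD -(natrD _ 1 1) oppr_eq0 pnatr_eq0.
rewrite big_mkcond /=.
transitivity (\sum_x `|out w x| ^+ 2).
  by apply: eq_bigr => x _; rewrite ow; case: ifP => //; rewrite normr0 expr0n.
rewrite out_iso /w.
have n2 : (2 : C) != 0 by rewrite pnatr_eq0.
have c2 : conjc (2^-1 : C) = 2^-1 by rewrite conjc_inv conjc_nat.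
have E : forall a b : C, `|2^-1 * a + 2^-1 * b| ^+ 2 =
    (`|a| ^+ 2 + `|b| ^+ 2 + (conjc a * b + conjc (conjc a * b))) / 4.
  have cD : forall a b : C, conjc (a + b) = conjc a + conjc b by move=> *; exact: rmorphD.
  have cM : forall a b : C, conjc (a * b) = conjc a * conjc b by move=> *; exact: rmorphM.
  move=> a b; rewrite !sqr_normc cD !cM c2 conjcK.
  have -> : (4 : C) = 2 * 2 by rewrite -natrM.
  by field.
rewrite (eq_bigr _ (fun y _ => E (v y) (v (sw S y)))).
have cS : forall F : bits reg -> C, conjc (\sum_y F y) = \sum_y conjc (F y).
  by move=> F; exact: rmorph_sum.
rewrite -mulr_suml !big_split /= (sw_sum S (fun y => `|v y| ^+ 2)) nv cS.
by congr (_ / _); ring.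
Qed.


Lemma odd_zero (v : qstate R reg) (S : {set 'I_n}) :
  (forall y, v (sw S y) = v y) -> forall x, sgn S x != 1 -> out v x = 0.
Proof.
move=> hv x hx.
have E : out v x = sgn S x * out v x.
  by rewrite -layer_sign; congr apply_layer; apply: boolp.funext => y; rewrite hv.
case: (sgn_pm S x) E => hs; first by rewrite hs eqxx in hx.
rewrite hs mulN1r => /eqP; rewrite -subr_eq0 opprK -mulr2n mulrn_eq0 /= => /eqP //.
Qed.

Definition mk (u u' : bits 'I_n) : bits reg :=
  [ffun q => match q with inl (j, i) => if j == ord0 then u i else u' i | inr _ => false end].
Definition cp (j : 'I_2) (y : bits reg) : bits 'I_n := [ffun i => y (inl (j, i))].

Lemma cp_mk0 u u' : cp ord0 (mk u u') = u.
Proof. by apply/ffunP => i; rewrite !ffunE. Qed.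
Lemma cp_mk1 u u' : cp ord_max (mk u u') = u'.
Proof. by apply/ffunP => i; rewrite !ffunE. Qed.
Lemma mk_cp y : mk (cp ord0 y) (cp ord_max y) = y.
Proof.
apply/ffunP => -[[j i]|[]//]; rewrite !ffunE.
case: eqP => [->//|h]; congr (y (inl (_, _))); apply: val_inj.
by case: j h => -[|[|j]] hj //= h; exfalso; apply: h; apply: val_inj.
Qed.

Lemma sum_mk (V : nmodType) (F : bits reg -> V) :
  \sum_y F y = \sum_u \sum_u' F (mk u u').
Proof.
rewrite pair_big /= (reindex (fun p : bits 'I_n * bits 'I_n => mk p.1 p.2)) //=.
exists (fun y => (cp ord0 y, cp ord_max y)) => [[u u'] _|y _] /=.
  by rewrite cp_mk0 cp_mk1.
exact: mk_cp.
Qed.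

Lemma inp_mk (psi : qstate R 'I_n) u u' :
  @input_state R n 2 0 psi (mk u u') = psi u * psi u'.
Proof.
rewrite /input_state.
have -> : [forall t : 'I_0, ~~ mk u u' (inr t)] by apply/forallP => -[].
rewrite mulr1 !big_ord_recr big_ord0 /= mul1r.
by congr (psi _ * psi _); apply/ffunP => i; rewrite !ffunE //=.
Qed.

Lemma sw_mk (S : {set 'I_n}) u u' : sw S (mk u u') = mk (mix S u' u) (mix S u u').
Proof.
apply/ffunP => -[[j i]|[]//]; rewrite !ffunE /=.
case: (i \in S) => //.
by case: j => -[|[|j]] hj.
Qed.

End Prob.

Section Prod.
Variable R : realType.
Local Notation C := R[i].

Lemma restr_mix (X : finType) (A S : {set X}) (v u : bits X) :
  restr A (mix S v u) = mix [set i : subreg A | val i \in S] (restr A v) (restr A u).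
Proof. by apply/ffunP => i; rewrite !ffunE inE. Qed.

Variables (X : finType) (C0 : {set X}).
Variables (phi1 : qstate R (subreg C0)) (phi2 : qstate R (subreg (~: C0))) (psi : qstate R X).
Hypothesis hpsi : forall x, psi x = phi1 (restr C0 x) * phi2 (restr (~: C0) x).

Lemma psi_join t r : psi (join t r) = phi1 t * phi2 r.
Proof. by rewrite hpsi restr_join_l restr_join_r. Qed.

Lemma norm_prod : \sum_x `|psi x| ^+ 2 = (\sum_t `|phi1 t| ^+ 2) * (\sum_r `|phi2 r| ^+ 2).
Proof.
rewrite (sum_join C0) big_distrlr; apply: eq_bigr => t _; apply: eq_bigr => r _.
by rewrite psi_join normrM exprMn.
Qed.

Lemma Q_prod (S : {set X}) :
  Qf S psi = Qf [set i : subreg C0 | val i \in S] phi1 * Qf [set i : subreg (~: C0) | val i \in S] phi2.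
Proof.
rewrite /Qf (sum_join C0).
under eq_bigr do under eq_bigr do rewrite (sum_join C0).
rewrite [RHS]big_distrlr /=; apply: eq_bigr => t _; apply: eq_bigr => r _.
rewrite [RHS]big_distrlr /=; apply: eq_bigr => t' _; apply: eq_bigr => r' _.
rewrite !hpsi !restr_mix !restr_join_l !restr_join_r !rmorphM /=; ring.
Qed.

Lemma psi_swC (u v : bits X) : psi (mix C0 v u) * psi (mix C0 u v) = psi u * psi v.
Proof.
have l : forall a b, restr C0 (mix C0 a b) = restr C0 a.
  by move=> a b; apply/ffunP => i; rewrite !ffunE (valP i).
have r : forall a b, restr (~: C0) (mix C0 a b) = restr (~: C0) b.
  move=> a b; apply/ffunP => i; rewrite !ffunE.
  by have := valP i; rewrite inE => /negbTE ->.
rewrite !hpsi !l !r; ring.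
Qed.

End Prod.


Section Round.
Variable R : realType.
Local Notation C := R[i].
Variable n : nat.
Local Notation reg := (register n 2 0).
Local Notation sgn := (@sgn R n).

Definition circ : circuit R reg := [:: lay R n].

Lemma circ_out (psi : qstate R 'I_n) x :
  outcome_prob circ psi x = sqmod (out (@input_state R n 2 0 psi) x).
Proof. by []. Qed.

Lemma inp_norm (psi : qstate R 'I_n) : \sum_x `|psi x| ^+ 2 = 1 ->
  \sum_y `|@input_state R n 2 0 psi y| ^+ 2 = 1.
Proof.
move=> h; rewrite sum_mk -[RHS]mulr1 -{1}h mulr_suml; apply: eq_bigr => u _.
rewrite -h mulr_sumr; apply: eq_bigr => u' _.
by rewrite inp_mk normrM exprMn.
Qed.

Lemma inp_Q (psi : qstate R 'I_n) (S : {set 'I_n}) :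
  \sum_y conjc (@input_state R n 2 0 psi y) * @input_state R n 2 0 psi (sw S y) = Qf S psi.
Proof.
rewrite sum_mk /Qf; apply: eq_bigr => u _; apply: eq_bigr => u' _.
by rewrite sw_mk !inp_mk.
Qed.


Lemma sum_sqmodC_pred (I : finType) (P : pred I) (F : I -> C) :
  ((\sum_(i | P i) sqmod (F i))%:C)%C = \sum_(i | P i) `|F i| ^+ 2.
Proof. by rewrite rmorph_sum; apply: eq_bigr => i _; exact: sqmodC. Qed.

Lemma half_card (C0 : {set 'I_n}) : ~~ odd n -> #|C0| = n./2 -> #|~: C0| = n./2.
Proof.
move=> ev hc; have := cardsC C0; rewrite hc card_ord.
have := odd_double_half n; rewrite (negbTE ev) add0n -addnn => h1 h2.
by apply/eqP; rewrite -(eqn_add2l n./2) h2 h1.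
Qed.

Lemma round_facts (eps : R) (psi : qstate R 'I_n) (C0 : {set 'I_n}) :
  ~~ odd n -> 0 < eps -> eps <= 1 -> hidden_cut_instance eps psi C0 ->
  [/\ \sum_x outcome_prob circ psi x = 1,
      forall x, sgn C0 x != 1 -> outcome_prob circ psi x = 0 &
      forall S : {set 'I_n}, #|S| = n./2 -> S != C0 -> S != ~: C0 ->
        \sum_(x | sgn S x == 1) outcome_prob circ psi x <= 1 - eps ^+ 2 / 2].
Proof.
move=> ev e0 e1 [cardC [phi1 [phi2 [n1 n2 f1 f2 hpsi]]]].
set v := @input_state R n 2 0 psi.
have npsi : \sum_x `|psi x| ^+ 2 = 1 by rewrite (norm_prod hpsi) !normalizedC // mulr1.
have nv : \sum_y `|v y| ^+ 2 = 1 := inp_norm npsi.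
split.
- apply: (@complexI R); rewrite (eq_bigr _ (fun x _ => circ_out psi x)) sum_sqmodC.
  by rewrite out_iso nv rmorph1.
- move=> x hx; rewrite circ_out (odd_zero (v := v) (S := C0)) //.
    by rewrite /sqmod /= expr0n /= addr0.
  move=> y; rewrite -(mk_cp y) sw_mk /v !inp_mk.
  exact: (psi_swC hpsi).
move=> S cS SC SnC.
set S1 := [set i : subreg C0 | val i \in S].
set S2 := [set i : subreg (~: C0) | val i \in S].
have S1n0 : S1 != finset.set0.
  apply/negP => /eqP h; move/negP: SnC; apply; apply/eqP.
  have sub : S \subset ~: C0.
    apply/fintype.subsetP => i iS; rewrite inE; apply/negP => iC.
    have : (exist (fun j => j \in C0) i iC) \in S1 by rewrite inE.
    by rewrite h inE.
  by apply/setP; apply/subset_cardP => //; rewrite cS half_card.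
have S1nT : S1 != [set: subreg C0].
  apply/negP => /eqP h; move/negP: SC; apply; apply/eqP.
  have sub : C0 \subset S.
    apply/fintype.subsetP => i iC.
    have : (exist (fun j => j \in C0) i iC) \in S1 by rewrite h inE.
    by rewrite inE.
  by apply/esym/setP; apply/subset_cardP => //; rewrite cS.
have e21 : eps ^+ 2 <= 1 by rewrite expr_le1 // ltW.
have hQ1 := Q_far S1n0 S1nT n1 f1 e21.
have Q10 := Q_ge0 S1 phi1.
have Q1r := Q_real S1 phi1.
have hQ2 := Q_re_le S2 (normalizedC n2).
rewrite -lecR (eq_bigr _ (fun x _ => circ_out psi x)) sum_sqmodC_pred prob_even //.
rewrite inp_Q (Q_prod hpsi) -/S1 -/S2.
set Q1 := Qf S1 phi1; set Q2 := Qf S2 phi2.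
have -> : conjc (Q1 * Q2) = Q1 * conjc Q2 by rewrite rmorphM /= Q1r.
have h4 : (0 : C) < 4 by rewrite ltr0n.
rewrite ler_pdivrMr //.
have le1 : Q1 * (Q2 + conjc Q2) <= Q1 * 2 by exact: ler_wpM2l.
have le2 : Q1 * 2 <= ((1 - eps ^+ 2)%:C)%C * 2 by apply: ler_wpM2r => //; rewrite ler0n.
have -> : ((1 - eps ^+ 2 / 2)%:C)%C * 4 = 2 + ((1 - eps ^+ 2)%:C)%C * 2 :> C.
  rewrite !(rmorphB, rmorph1, fmorph_div, rmorph_nat) /=.
  have n2' : (2 : C) != 0 by rewrite pnatr_eq0.
  field.
all: try done.
rewrite -addrA lerD2l -mulrDr.
exact: le_trans le1 le2.
Qed.

End Round.


Section Succ.
Variable R : realType.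
Variables (n : nat) (I : finType) (r : nat).
Variable ev : {set 'I_n} -> I -> bool.

Definition post_of (s : {ffun 'I_r -> I}) : {set 'I_n} :=
  if [pick A : {set 'I_n} | (#|A| == n./2) && [forall j, ev A (s j)]] is Some A then A
  else finset.set0.

Variables (p : I -> R) (C0 : {set 'I_n}) (d : R).
Hypothesis p0 : forall x, 0 <= p x.
Hypothesis p1 : \sum_x p x = 1.
Hypothesis pC : forall x, ~~ ev C0 x -> p x = 0.
Hypothesis cC : #|C0| = n./2.
Hypothesis d01 : d <= 1.
Hypothesis pB : forall S : {set 'I_n}, #|S| = n./2 -> S != C0 -> S != ~: C0 ->
  \sum_(x | ev S x) p x <= 1 - d.

Definition Pr (s : {ffun 'I_r -> I}) := \prod_j p (s j).
Definition consis (S : {set 'I_n}) (s : {ffun 'I_r -> I}) := [forall j, ev S (s j)].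
Definition bad (S : {set 'I_n}) := [&& #|S| == n./2, S != C0 & S != ~: C0].

Lemma Pr_ge0 s : 0 <= Pr s.
Proof. by apply: prodr_ge0 => j _. Qed.

Lemma sum_cons (S : {set 'I_n}) :
  \sum_(s | consis S s) Pr s = (\sum_(x | ev S x) p x) ^+ r.
Proof.
rewrite -[in RHS](card_ord r) -prodr_const (bigA_distr_big (ev S) (fun _ x => p x)).
by apply: eq_bigl => s; apply/forallP/ffun_onP.
Qed.

Lemma sum_all : \sum_s Pr s = 1.
Proof.
rewrite /Pr -(bigA_distr_bigA (fun (_ : 'I_r) x => p x)) /=.
by rewrite big1 // => j _.
Qed.

Lemma sum_notC : \sum_(s | ~~ consis C0 s) Pr s = 0.
Proof.
apply: big1 => s /forallPn [j hj].
by rewrite /Pr (bigD1 j) //= pC // mul0r.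
Qed.

Lemma good_post s : consis C0 s -> [forall S, bad S ==> ~~ consis S s] ->
  (post_of s == C0) || (post_of s == ~: C0).
Proof.
move=> hC hB; rewrite /post_of; case: pickP => [A /andP[cA hA]|none].
  have := forallP hB A; rewrite /bad /consis cA hA /= implybF negb_and !negbK.
  by case/orP => ->; rewrite ?orbT.
by have := none C0; rewrite cC eqxx; move: hC; rewrite /consis => ->.
Qed.

Lemma success_bound :
  1 - (2 ^ n)%:R * (1 - d) ^+ r <=
  \sum_(s | (post_of s == C0) || (post_of s == ~: C0)) Pr s.
Proof.
set good := fun s => consis C0 s && [forall S, bad S ==> ~~ consis S s].
have h1 : \sum_(s | good s) Pr s <= \sum_(s | (post_of s == C0) || (post_of s == ~: C0)) Pr s.
  rewrite [X in _ <= X]big_mkcond [X in X <= _]big_mkcond /=; apply: ler_sum => s _.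
  case: ifP => [/andP[hC hB]|_]; first by rewrite good_post.
  by case: ifP => _ //; exact: Pr_ge0.
apply: le_trans _ h1.
have h2 : \sum_s Pr s = \sum_(s | good s) Pr s + \sum_(s | ~~ good s) Pr s := bigID good _ _.
rewrite sum_all in h2.
have h3 : \sum_(s | ~~ good s) Pr s <= (2 ^ n)%:R * (1 - d) ^+ r.
  apply: (@le_trans _ _ (\sum_s ((if ~~ consis C0 s then Pr s else 0) +
            \sum_(S | bad S) (if consis S s then Pr s else 0)))).
    rewrite big_mkcond /=; apply: ler_sum => s _.
    case: ifP => [ng|_]; last first.
      by apply: addr_ge0; [case: ifP | apply: sumr_ge0 => S _; case: ifP] => // _; exact: Pr_ge0.
    case: (boolP (consis C0 s)) => hC /=; last first.
      by rewrite lerDl; apply: sumr_ge0 => S _; case: ifP => // _; exact: Pr_ge0.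
    rewrite add0r; move: ng; rewrite /good hC /= => /forallPn [A].
    rewrite negb_imply negbK => /andP[bA cA].
    rewrite (bigD1 A) //= cA lerDl; apply: sumr_ge0 => S _; case: ifP => // _; exact: Pr_ge0.
  rewrite big_split /= -big_mkcond sum_notC add0r exchange_big /=.
  apply: (@le_trans _ _ (\sum_(S : {set 'I_n}) (1 - d) ^+ r)).
    rewrite [X in _ <= X](bigID bad) /= -[X in X <= _]addr0; apply: lerD.
      apply: ler_sum => S bS; rewrite -big_mkcond sum_cons.
      have q0 : 0 <= \sum_(x | ev S x) p x by apply: sumr_ge0.
      move/and3P: bS => [/eqP cS SC SnC].
      have hb := pB cS SC SnC.
      by apply: lerXn2r; rewrite // nnegrE // (le_trans q0 hb).
    by apply: sumr_ge0 => S _; apply: exprn_ge0; rewrite subr_ge0.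
  rewrite (eq_bigl (fun S => S \in [set: {set 'I_n}])); last by move=> S; rewrite inE.
  by rewrite sumr_const -powersetT card_powerset cardsT card_ord mulr_natl.
lra.
Qed.

End Succ.


Section NumL.
Variable R : realType.

Lemma bern (d : R) N : 0 <= d -> 1 + N%:R * d <= (1 + d) ^+ N.
Proof.
move=> hd; elim: N => [|N IH]; first by rewrite mul0r addr0 expr0.
rewrite exprS -natr1.
have h0 : 0 <= N%:R * d by rewrite mulr_ge0.
nra.
Qed.

Lemma pow_half (d : R) N : 0 <= d -> d <= 1 -> 1 <= N%:R * d -> (1 - d) ^+ N <= 2^-1.
Proof.
move=> h0 h1 hN.
have A : ((1 - d) * (1 + d)) ^+ N <= 1 by apply: exprn_ile1; nra.
rewrite exprMn in A.
have B := bern N h0.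
have x0 : 0 <= (1 - d) ^+ N by apply: exprn_ge0; lra.
set x := (1 - d) ^+ N in A x0 *; set y := (1 + d) ^+ N in A B *.
nra.
Qed.

Lemma ln2_ge : 2^-1 <= ln (2 : R).
Proof.
have h : ln (1 + - 2^-1 : R) <= - 2^-1 by apply: le_ln1Dx; lra.
have e : (1 + - 2^-1 : R) = 2^-1 by field.
rewrite e lnV ?posrE // in h; lra.
Qed.

End NumL.

Section Lay.
Variable R : realType.
Variable n : nat.

Lemma disj_gi (i j : 'I_n) : i != j ->
  [disjoint gate_support (@gi R n i) & gate_support (@gi R n j)].
Proof.
move=> ij; rewrite -setI_eq0; apply/eqP/setP => q; rewrite !inE /=.
apply/negP => /andP[/orP[]/eqP-> /orP[]];
  rewrite ?qa_inj ?qb_inj ?(negbTE ij) ?(negbTE (qa_qb _ _)) // eq_sym (negbTE (qa_qb _ _)) //.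
Qed.

Lemma lay_layer_ok (L : seq 'I_n) : uniq L -> layer_ok (map (@gi R n) L).
Proof.
elim: L => [|i L IH] //= /andP[iL uL]; split.
- by split; [exact: gi_ok | exact: Bm_unitary].
- elim: L iL {IH uL} => [|j L IH'] //= hj; constructor.
    by apply: disj_gi; move: hj; rewrite in_cons negb_or => /andP[].
  by apply: IH'; move: hj; rewrite in_cons negb_or => /andP[].
- exact: IH.
Qed.

End Lay.

Unset Implicit Arguments.

Theorem theorem4p3 (R : realType) :
  exists c : R, 0 < c /\
  forall (n : nat) (eps : R), ~~ odd n -> (0 < n)%N -> 0 < eps -> eps <= 1 ->
  exists (k a r : nat) (circ : circuit R (register n k a))
         (post : {ffun 'I_r -> bits (register n k a)} -> {set 'I_n}),
    circuit_ok circ /\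
    [/\         (* total number of copies used: O(n^2/eps^2) *)
        (r * k)%:R <= c * (n%:R ^+ 2 / eps ^+ 2),
        (* copies accessed coherently at a time: O(n/eps^2) *)
        k%:R <= c * (n%:R / eps ^+ 2),
        (* circuit depth: O(log(n/eps^2)) *)
        (depth circ)%:R <= c * ln (n%:R / eps ^+ 2),
        (* ancillary qubits: O(n^2/eps^2) *)
        a%:R <= c * (n%:R ^+ 2 / eps ^+ 2) &
        (* success with high probability on every valid instance *)
        forall (psi : qstate R 'I_n) (C : {set 'I_n}),
          hidden_cut_instance eps psi C ->
          2 / 3 <= success_prob circ post psi C].
Proof.
exists 20; split; first by rewrite ltr0n.
move=> n eps ev n0 e0 e1.
have n2 : (2 <= n)%N by case: n ev n0 => [|[|n]].
have n2R : (2 : R) <= n%:R by rewrite ler_nat.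
set x := 2 / eps ^+ 2.
have e20 : 0 < eps ^+ 2 by rewrite exprn_gt0.
have e21 : eps ^+ 2 <= 1 by rewrite expr_le1 // ltW.
set ie := (eps ^+ 2)^-1.
have ie1 : 1 <= ie by rewrite /ie invf_ge1.
have x0 : 0 <= x by rewrite /x divr_ge0 // ltW.
have [N [hN1 hN2]] : exists N : nat, x < N%:R /\ N%:R <= x + 1.
  exists (Num.trunc x).+1; split.
    by have := truncn_le_nat x (Num.trunc x); rewrite leqnn => /esym.
  by rewrite -natr1 lerD2r truncn_le.
set r := (N * (n + 2))%N.
exists 2%N, 0%N, r, (circ R n),
  (@post_of n (bits (register n 2 0)) r (fun S y => @sgn R n S y == 1)).
split.
  constructor; last by constructor.
  exact: lay_layer_ok (enum_uniq _).
have xe : x = 2 * ie by rewrite /x /ie.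
split.
- rewrite /r !natrM natrD.
  have hN3 : N%:R <= 3 * ie :> R by lra.
  have N0 : 0 <= N%:R :> R by [].
  have a2 : n%:R + 2 <= n%:R ^+ 2 :> R by nra.
  have a1 : N%:R * (n%:R + 2) <= 3 * ie * (n%:R ^+ 2) :> R.
    apply: ler_pM => //; lra.
  have : 0 <= ie * n%:R ^+ 2 by nra.
  rewrite expr2 in a1 *; nra.
- rewrite -/ie; nra.
- rewrite /depth /= -/ie.
  have h2 : 2 <= n%:R * ie by nra.
  have := ln2_ge R.
  have : ln 2 <= ln (n%:R * ie) by rewrite ler_ln ?posrE //; lra.
  lra.
- rewrite -/ie; have : 0 <= n%:R ^+ 2 * ie by nra.
  lra.
move=> psi C0 hc.
have [T Z B] := round_facts ev e0 e1 hc.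
set d := eps ^+ 2 / 2.
have hb := success_bound r (ev := fun S y => @sgn R n S y == 1)
  (p := outcome_prob (circ R n) psi) (d := d) (fun y => sqmod_ge0 _) T Z hc.1 _ B.
apply: le_trans (hb _); last by rewrite /d; lra.
have hpow : (1 - d) ^+ r <= (2^-1) ^+ (n + 2).
  rewrite /r exprM; apply: lerXn2r; rewrite ?nnegrE.
  - by apply: exprn_ge0; rewrite /d; lra.
  - by [].
  apply: pow_half; rewrite /d; try lra.
  have : x * (eps ^+ 2 / 2) = 1 by rewrite /x; field; rewrite gt_eqF.
  have : 0 <= eps ^+ 2 / 2 by lra.
  nra.
have e4 : (2 ^ n)%:R * (2^-1 : R) ^+ (n + 2) = 4^-1.
  rewrite natrX exprD mulrA -exprMn mulfV ?pnatr_eq0 // expr1n mul1r.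
  by field.
have h2n : (0 : R) <= (2 ^ n)%:R by [].
have : (2 ^ n)%:R * (1 - d) ^+ r <= 4^-1 :> R.
  by rewrite -e4; apply: ler_wpM2l.
lra.
Qed.
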